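(* Let $R$ be a commutative multiplicative hyperring with identity, let $\alpha$ be a good endomorphism of $R$, and let $I$ be an $\alpha$-prime hyperideal of $R$. If $y\in R$ and $(\alpha(y))^n\subseteq I$ for some $n\in\mathbb N$, then $\alpha^2(y)=\alpha(\alpha(y))\in I$.
   Context: A multiplicative hyperring is an abelian group $(R,+)$ with a hyperoperation $\circ:R\times R\to \mathcal P^*(R)$ (nonempty subsets) such that $a\circ(b\circ c)=(a\circ b)\circ c$, $a\circ(b+c)\subseteq a\circ b+a\circ c$, $(b+c)\circ a\subseteq b\circ a+c\circ a$, and $a\circ(-b)=(-a)\circ b=-(a\circ b)$. Products of subsets are unions of elementwise products, and $x^n=x\circ\cdots\circ x$ ($n$ factors). Commutative means $a\circ b=b\circ a$. An identity $1$ satisfies $a\in1\circ a$ for all $a$. A hyperideal is a nonempty $I\subseteq R$ closed under subtraction with $r\circ x\subseteq I$ for $r\in R$, $x\in I$. Standing assumption: every hyperideal is a $\mathbf C$-hyperideal, i.e. for every finite product $A=r_1\circ\cdots\circ r_n$, $A\cap I\ne\emptyset$ implies $A\subseteq I$. A good endomorphism $\alpha$ satisfies $\alpha(x+y)=\alpha(x)+\alpha(y)$ and $\alpha(x\circ y)=\alpha(x)\circ\alpha(y)$. A hyperideal $I$ is $\alpha$-prime if for all $x,y$, $x\circ y\subseteq I$ implies $x\in I$ or $\alpha(y)\in I$. *)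

(* Defs.v *)
From HB Require Import structures.
From mathcomp Require Import all_boot all_algebra.
Set Implicit Arguments. Unset Strict Implicit. Unset Printing Implicit Defensive.
Import GRing.Theory.
Local Open Scope ring_scope.

(* A hyperoperation: a o b is the subset (hop a b) of R. *)
Definition hyperop (R : Type) := R -> R -> (R -> Prop).

Section HyperDefs.
Variables (R : zmodType) (hop : hyperop R).

Definition hsing (a : R) : R -> Prop := fun z => z = a.

Definition hsetmul (A B : R -> Prop) : R -> Prop :=
  fun z => exists a b, A a /\ B b /\ hop a b z.

Definition hsetadd (A B : R -> Prop) : R -> Prop :=
  fun z => exists a b, A a /\ B b /\ z = a + b.

Definition hsetopp (A : R -> Prop) : R -> Prop := fun z => exists a, A a /\ z = - a.

Definition hsubset (A B : R -> Prop) := forall z, A z -> B z.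
Definition hseteq (A B : R -> Prop) := forall z, A z <-> B z.

(* x^n = x o ... o x (n factors), for n >= 1; hpow x 0 is a dummy {x}. *)
Fixpoint hpow (x : R) (n : nat) : R -> Prop :=
  match n with
  | 0 => hsing x
  | 1 => hsing x
  | S m => hsetmul (hpow x m) (hsing x)
  end.

Definition hprod (r1 : R) (rs : seq R) : R -> Prop :=
  foldl (fun A r => hsetmul A (hsing r)) (hsing r1) rs.

Definition is_mult_hyperring : Prop :=
  (forall a b, exists z, hop a b z) /\
  (forall a b c, hseteq (hsetmul (hsing a) (hop b c)) (hsetmul (hop a b) (hsing c))) /\
  (forall a b c, hsubset (hop a (b + c)) (hsetadd (hop a b) (hop a c))) /\
  (forall a b c, hsubset (hop (b + c) a) (hsetadd (hop b a) (hop c a))) /\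
  (forall a b, hseteq (hop a (- b)) (hsetopp (hop a b))) /\
  (forall a b, hseteq (hop (- a) b) (hsetopp (hop a b))).

Definition hcommutative : Prop := forall a b, hseteq (hop a b) (hop b a).

Definition has_identity : Prop := exists e : R, forall a, hop e a a.

Definition is_hyperideal (I : R -> Prop) : Prop :=
  (exists x, I x) /\
  (forall x y, I x -> I y -> I (x - y)) /\
  (forall r x, I x -> hsubset (hop r x) I).

Definition is_C_hyperideal (I : R -> Prop) : Prop :=
  is_hyperideal I /\
  forall (r1 : R) (rs : seq R),
    (exists z, hprod r1 rs z /\ I z) -> hsubset (hprod r1 rs) I.

Definition all_hyperideals_C : Prop :=
  forall I, is_hyperideal I -> is_C_hyperideal I.

Definition good_endo (alpha : R -> R) : Prop :=
  (forall x y, alpha (x + y) = alpha x + alpha y) /\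
  (forall x y, hseteq (fun z => exists w, hop x y w /\ z = alpha w)
                      (hop (alpha x) (alpha y))).

Definition alpha_prime (alpha : R -> R) (I : R -> Prop) : Prop :=
  is_hyperideal I /\
  forall x y, hsubset (hop x y) I -> I x \/ I (alpha y).

End HyperDefs.

(* Main.v *)
Require Import Defs.
From mathcomp Require Import all_boot all_algebra.

Lemma hpow_prod (R : zmodType) (hop : hyperop R) (x : R) (k : nat) :
  hpow hop x k.+1 = hprod hop x (nseq k x).
Proof.
elim: k => [//|k IH].
have -> : nseq k.+1 x = rcons (nseq k x) x.
  by elim: k {IH} => [//|k IHk] /=; rewrite -IHk.
rewrite /hprod foldl_rcons -/(hprod hop x (nseq k x)) -IH.
by [].
Qed.

Lemma hpow_ne (R : zmodType) (hop : hyperop R) (x : R) (k : nat) :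
  (forall a b, exists z, hop a b z) -> exists z, hpow hop x k.+1 z.
Proof.
move=> Hex; elim: k => [|k [z Hz]]; first by exists x.
have [w Hw] := Hex z x.
by exists w; change (hsetmul hop (hpow hop x k.+1) (hsing x) w); exists z, x.
Qed.

Theorem mainTheorem9 (R : zmodType) (hop : hyperop R) (alpha : R -> R)
  (I : R -> Prop) :
  is_mult_hyperring hop -> hcommutative hop -> has_identity hop ->
  all_hyperideals_C hop ->
  good_endo hop alpha -> alpha_prime hop alpha I ->
  forall (y : R) (n : nat), (0 < n)%N ->
    hsubset (hpow hop (alpha y) n) I -> I (alpha (alpha y)).
Proof.
move=> [Hex _] Hcom [e He] HC _ [Hid Hpr] y n.
set x := alpha y.
case: n => [//|k] _.
elim: k => [|k IH] Hsub.
  have Ix : I x by apply: Hsub.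
  have [Ie|//] := Hpr e x (proj2 (proj2 Hid) e x Ix).
  apply: (proj2 (proj2 Hid) (alpha x) e Ie).
  by apply/Hcom; apply: He.
have [z Hz] := @hpow_ne R hop x k Hex.
have Hzx : hsubset (hop z x) I.
  move=> w Hw; apply: Hsub.
  by change (hsetmul hop (hpow hop x k.+1) (hsing x) w); exists z, x.
have [Iz|//] := Hpr z x Hzx.
apply: IH.
have [_ HCp] := HC I Hid.
rewrite hpow_prod; apply: HCp.
by exists z; rewrite -hpow_prod.
Qed.
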